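(* Let $\mathcal{G}$ be the full subcategory of $\mathcal{L}$ whose objects are geometric lattices. Then $\mathcal{G}$, equipped with the normal monomorphisms and normal epimorphisms of $\mathcal{L}$ whose source and target lie in $\mathcal{G}$, is a proto-exact category (a proto-exact subcategory of $\mathcal{L}$).
   Context: $\mathcal{L}$ is the category of algebraic lattices (complete lattices in which every element is a join of compact elements), with morphisms the maps preserving arbitrary joins and sending compact elements to compact elements. A morphism $f:L_1\to L_2$ in $\mathcal{L}$ is a normal monomorphism if it is injective with downward closed image, and a normal epimorphism if there is $x_0\in L_1$ and an isomorphism $\varphi:\{y\in L_1:y\ge x_0\}\to L_2$ with $f(y)=\varphi(y\vee x_0)$. A finite lattice $L$ is semimodular if all maximal chains between any two comparable elements have the same length and the resulting height function $h$ (length of a maximal chain from $0$) satisfies $h(x)+h(y)\ge h(x\vee y)+h(x\wedge y)$; it is geometric if it is semimodular and every element is a join of atoms (elements of height $1$). Proto-exact category: a pointed category with classes $\mathfrak{M},\mathfrak{E}$ satisfying: $0\to A\in\mathfrak{M}$, $A\to0\in\mathfrak{E}$; both classes contain isomorphisms and are closed under composition; a square with horizontal maps in $\mathfrak{M}$ and vertical maps in $\mathfrak{E}$ is a pullback iff a pushout; any cospan $A'\hookrightarrow B'\twoheadleftarrow B$ and any span $A'\twoheadleftarrow A\hookrightarrow B$ can be completed to such a bi-Cartesian square. *)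

(* Defs.v *)
From HB Require Import structures.
From mathcomp Require Import all_boot all_order.
Set Implicit Arguments. Unset Strict Implicit. Unset Printing Implicit Defensive.
Import Order.TTheory.
Local Open Scope order_scope.

Section LatticeDefs.
Context {d : Order.disp_t} (T : finTBLatticeType d).

Definition covers (x y : T) : bool :=
  (x < y) && [forall z : T, ~~ ((x < z) && (z < y))].

(* s is a maximal chain x = c0 < c1 < ... < cn = y (each step a cover),
   written as the list [c1; ...; cn]; its length is size s. *)
Definition maxchain (x y : T) (s : seq T) : bool :=
  path covers x s && (last x s == y).

Definition semimodular : Prop :=
  (forall (x y : T) (s1 s2 : seq T),
      maxchain x y s1 -> maxchain x y s2 -> size s1 = size s2) /\
  exists h : T -> nat,
    (forall (x : T) (s : seq T), maxchain \bot x s -> size s = h x) /\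
    (forall x y : T, h (x `|` y) + h (x `&` y) <= h x + h y)%N.

Definition atom (a : T) : bool := covers \bot a.

Definition geometric : Prop :=
  semimodular /\
  forall x : T, exists S : {set T},
    (forall a, a \in S -> atom a) /\ x = \join_(a in S) a.

(* compact elements (every subset of a finite lattice is finite) *)
Definition compact (x : T) : Prop :=
  forall S : {set T}, x <= \join_(s in S) s ->
    exists F : {set T}, F \subset S /\ x <= \join_(s in F) s.

End LatticeDefs.

Record GObj := MkGObj {
  gdisp : Order.disp_t;
  glat : finTBLatticeType gdisp;
  ggeom : geometric glat }.
Coercion glat : GObj >-> finTBLatticeType.

Definition Lmor (A B : GObj) (f : A -> B) : Prop :=
  (forall S : {set A}, f (\join_(x in S) x) = \join_(x in S) f x) /\
  (forall x : A, compact x -> compact (f x)).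

Definition NMono (A B : GObj) (f : A -> B) : Prop :=
  Lmor f /\ injective f /\
  (forall (x : A) (y : B), y <= f x -> exists z : A, f z = y).

Definition NEpi (A B : GObj) (f : A -> B) : Prop :=
  Lmor f /\
  exists (x0 : A) (phi : A -> B),
    (forall y z : A, x0 <= y -> x0 <= z -> (phi y <= phi z) = (y <= z)) /\
    (forall w : B, exists y : A, x0 <= y /\ phi y = w) /\
    (forall y : A, f y = phi (y `|` x0)).

Definition GIso (A B : GObj) (f : A -> B) : Prop :=
  Lmor f /\ exists g : B -> A, Lmor g /\
    (forall x, g (f x) = x) /\ (forall y, f (g y) = y).

Definition GInitial (Z : GObj) : Prop :=
  forall A : GObj, exists f : Z -> A, Lmor f /\
    forall g : Z -> A, Lmor g -> forall z, g z = f z.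
Definition GTerminal (Z : GObj) : Prop :=
  forall A : GObj, exists f : A -> Z, Lmor f /\
    forall g : A -> Z, Lmor g -> forall a, g a = f a.
Definition GZero (Z : GObj) : Prop := GInitial Z /\ GTerminal Z.

(* Square
     A  --i-->  B
     |p         |q
     A' --j-->  B'     *)
Definition commutes (A B A' B' : GObj) (i : A -> B) (p : A -> A')
  (j : A' -> B') (q : B -> B') : Prop := forall x, q (i x) = j (p x).

Definition GPullback (A B A' B' : GObj) (i : A -> B) (p : A -> A')
  (j : A' -> B') (q : B -> B') : Prop :=
  commutes i p j q /\
  forall (X : GObj) (u : X -> B) (v : X -> A'), Lmor u -> Lmor v ->
    (forall x, q (u x) = j (v x)) ->
    exists w : X -> A, Lmor w /\ (forall x, i (w x) = u x) /\
      (forall x, p (w x) = v x) /\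
      forall w' : X -> A, Lmor w' -> (forall x, i (w' x) = u x) ->
        (forall x, p (w' x) = v x) -> forall x, w' x = w x.

Definition GPushout (A B A' B' : GObj) (i : A -> B) (p : A -> A')
  (j : A' -> B') (q : B -> B') : Prop :=
  commutes i p j q /\
  forall (X : GObj) (u : B -> X) (v : A' -> X), Lmor u -> Lmor v ->
    (forall x, u (i x) = v (p x)) ->
    exists w : B' -> X, Lmor w /\ (forall x, w (q x) = u x) /\
      (forall x, w (j x) = v x) /\
      forall w' : B' -> X, Lmor w' -> (forall x, w' (q x) = u x) ->
        (forall x, w' (j x) = v x) -> forall x, w' x = w x.

Definition ProtoExactG : Prop :=
  (exists Z : GObj, GZero Z /\
     forall A : GObj,
       (exists f : Z -> A, NMono f) /\ (exists g : A -> Z, NEpi g)) /\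
  (forall (A B : GObj) (f : A -> B), GIso f -> NMono f /\ NEpi f) /\
  (forall (A B C : GObj) (f : A -> B) (g : B -> C),
      NMono f -> NMono g -> NMono (g \o f)) /\
  (forall (A B C : GObj) (f : A -> B) (g : B -> C),
      NEpi f -> NEpi g -> NEpi (g \o f)) /\
  (forall (A B A' B' : GObj) (i : A -> B) (p : A -> A')
          (j : A' -> B') (q : B -> B'),
      NMono i -> NMono j -> NEpi p -> NEpi q -> commutes i p j q ->
      (GPullback i p j q <-> GPushout i p j q)) /\
  (forall (A' B B' : GObj) (j : A' -> B') (q : B -> B'),
      NMono j -> NEpi q ->
      exists (A : GObj) (i : A -> B) (p : A -> A'),
        NMono i /\ NEpi p /\ GPullback i p j q /\ GPushout i p j q) /\
  (forall (A A' B : GObj) (p : A -> A') (i : A -> B),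
      NEpi p -> NMono i ->
      exists (B' : GObj) (j : A' -> B') (q : B -> B'),
        NMono j /\ NEpi q /\ GPullback i p j q /\ GPushout i p j q).

(* Main.v *)
From HB Require Import structures.
Require Import Defs.
From mathcomp Require Import all_boot all_order.
From mathcomp Require Import zify.
Set Implicit Arguments. Unset Strict Implicit. Unset Printing Implicit Defensive.
Import Order.TTheory.
Local Open Scope order_scope.

Section Chains.
Context {d : Order.disp_t} (T : finTBLatticeType d).
Implicit Types x y z : T.

Lemma covers_lt x y : covers x y -> x < y.
Proof. by case/andP. Qed.

Lemma path_covers_le x s : path (@covers _ T) x s -> x <= last x s.
Proof.
elim: s x => [|a s IH] x /=; first by [].
case/andP => /covers_lt/ltW xa /IH; exact: le_trans.
Qed.

Lemma maxchain_le x y s : maxchain x y s -> x <= y.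
Proof. by case/andP => /path_covers_le H /eqP <-. Qed.

Lemma maxchain_lt x y s : maxchain x y s -> s != [::] -> x < y.
Proof.
case: s => [|a s] //= /andP[/andP[/covers_lt xa ps] /eqP <-] _.
exact: lt_le_trans xa (path_covers_le ps).
Qed.

Lemma maxchain_cat x y z s1 s2 :
  maxchain x y s1 -> maxchain y z s2 -> maxchain x z (s1 ++ s2).
Proof.
case/andP => p1 /eqP l1; case/andP => p2 /eqP l2.
by rewrite /maxchain cat_path last_cat l1 p1 p2 l2 eqxx.
Qed.

Lemma exists_cover x y : x < y -> exists z, covers x z && (z <= y).
Proof.
move=> xy.
pose P := fun z => (x < z) && (z <= y).
have Ay : P y by rewrite /P xy lexx.
case: (@arg_minnP _ y P (fun z => #|[set w | w < z]|) Ay) => z /andP[xz zy] Hmin.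
exists z; rewrite zy andbT /covers xz /=.
apply/forallP => w; apply/negP => /andP[xw wz].
have := Hmin w; rewrite /P xw (le_trans (ltW wz) zy) => /(_ isT).
apply/negP; rewrite -ltnNge; apply: proper_card; apply/properP; split.
  by apply/subsetP => v; rewrite !inE => vw; exact: lt_trans vw wz.
by exists w; rewrite !inE ?ltxx.
Qed.

Lemma exists_maxchain x y : x <= y -> exists s, maxchain x y s.
Proof.
move: {2}#|[set w | x < w]| (leqnn #|[set w | x < w]|) => n.
elim: n x => [|n IH] x Hn xy.
  case: (eqVneq x y) => [->|nxy]; first by exists [::]; rewrite /maxchain /= eqxx.
  have Hy: y \in [set w | x < w] by rewrite inE lt_def eq_sym nxy xy.
  have : (0 < #|[set w | (x < w)%O]|)%N by apply/card_gt0P; exists y.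
  by rewrite lt0n -leqn0 Hn.
case: (eqVneq x y) => [->|nxy]; first by exists [::]; rewrite /maxchain /= eqxx.
have xy' : x < y by rewrite lt_def eq_sym nxy xy.
case: (exists_cover xy') => z /andP[cxz zy].
have xz := covers_lt cxz.
have Hc : (#|[set w | (z < w)%O]| <= n)%N.
  rewrite -ltnS; apply: leq_trans Hn; apply: proper_card; apply/properP; split.
    by apply/subsetP => v; rewrite !inE => zv; exact: lt_trans xz zv.
  by exists z; rewrite !inE ?ltxx.
case: (IH z Hc zy) => s /andP[ps /eqP ls].
by exists (z :: s); rewrite /maxchain /= cxz ps ls eqxx.
Qed.

Section Height.
Variable h : T -> nat.
Hypothesis hh : forall x s, maxchain \bot x s -> size s = h x.

Lemma h_bot : h \bot = 0%N.
Proof. by rewrite -(hh (s:=[::])) // /maxchain /= eqxx. Qed.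

Lemma h_chain x y s : maxchain x y s -> h y = (h x + size s)%N.
Proof.
move=> m; case: (exists_maxchain (le0x x)) => s0 m0.
rewrite -(hh (maxchain_cat m0 m)) size_cat (hh m0) //.
Qed.

Lemma h_le x y : x <= y -> (h x <= h y)%N.
Proof. by case/exists_maxchain => s /h_chain ->; rewrite leq_addr. Qed.

Lemma h_lt x y : x < y -> (h x < h y)%N.
Proof.
move=> xy; case: (exists_maxchain (ltW xy)) => s m.
rewrite (h_chain m) -{1}(addn0 (h x)) ltn_add2l lt0n size_eq0.
by apply/eqP => s0; move: m; rewrite s0 /maxchain /= => /eqP e; rewrite e ltxx in xy.
Qed.

Lemma cover_of_h x z : x < z -> (h z <= (h x).+1)%N -> covers x z.
Proof.
move=> xz hz; rewrite /covers xz /=; apply/forallP => w; apply/negP => /andP[/h_lt a /h_lt b].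
lia.
Qed.

Lemma h_atom t : atom t -> h t = 1%N.
Proof. by rewrite /atom => At; rewrite -(hh (s := [:: t])) // /maxchain /= At eqxx. Qed.

End Height.
End Chains.

Section Itv.
Context {d : Order.disp_t} (T : finTBLatticeType d) (lo hi : T).

Definition inI (x : T) := (lo <= x) && (x <= lo `|` hi).
Record Itv := MkItv { ival : T; ivalP : inI ival }.
HB.instance Definition _ := [isSub for ival].
HB.instance Definition _ := [Finite of Itv by <:].

Definition Ile (x y : Itv) := ival x <= ival y.
Lemma Ile_refl : reflexive Ile. Proof. by move=> x; rewrite /Ile lexx. Qed.
Lemma Ile_anti : antisymmetric Ile.
Proof. by move=> x y /le_anti H; apply: val_inj. Qed.
Lemma Ile_trans : transitive Ile.
Proof. by move=> x y z; rewrite /Ile; apply: le_trans. Qed.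
HB.instance Definition _ := Order.Le_isPOrder.Build d Itv Ile_refl Ile_anti Ile_trans.

Lemma inI_meet x y : inI x -> inI y -> inI (x `&` y).
Proof.
case/andP => a b /andP[c e]; rewrite /inI lexI a c /=.
exact: (le_trans (leIl x y) b).
Qed.
Lemma inI_join x y : inI x -> inI y -> inI (x `|` y).
Proof.
case/andP => a b /andP[c e]; rewrite /inI leUx b e /= andbT.
exact: (le_trans a (leUl x y)).
Qed.
Definition Imeet (x y : Itv) := MkItv (inI_meet (ivalP x) (ivalP y)).
Definition Ijoin (x y : Itv) := MkItv (inI_join (ivalP x) (ivalP y)).
Lemma ImeetP (x y z : Itv) : (x <= Imeet y z) = (x <= y) && (x <= z).
Proof. exact: lexI. Qed.
Lemma IjoinP (x y z : Itv) : (Ijoin x y <= z) = (x <= z) && (y <= z).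
Proof. exact: leUx. Qed.
HB.instance Definition _ := Order.POrder_MeetJoin_isLattice.Build d Itv ImeetP IjoinP.

Lemma inI_lo : inI lo. Proof. by rewrite /inI lexx leUl. Qed.
Lemma inI_hi : inI (lo `|` hi). Proof. by rewrite /inI lexx leUl. Qed.
Definition Ibot := MkItv inI_lo.
Definition Itop := MkItv inI_hi.
Lemma Ibot_le (x : Itv) : Ibot <= x. Proof. by case/andP: (ivalP x). Qed.
Lemma Ile_top (x : Itv) : x <= Itop. Proof. by case/andP: (ivalP x). Qed.
HB.instance Definition _ := Order.hasBottom.Build d Itv Ibot_le.
HB.instance Definition _ := Order.hasTop.Build d Itv Ile_top.


Lemma ival_le (x y : Itv) : (x <= y) = (ival x <= ival y). Proof. by []. Qed.
Lemma ival_lt (x y : Itv) : (x < y) = (ival x < ival y).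
Proof. by rewrite !lt_def ival_le -(inj_eq val_inj). Qed.
Lemma ival_join (x y : Itv) : ival (x `|` y) = ival x `|` ival y. Proof. by []. Qed.
Lemma ival_meet (x y : Itv) : ival (x `&` y) = ival x `&` ival y. Proof. by []. Qed.
Lemma ival_bot : ival (\bot : Itv) = lo. Proof. by []. Qed.
Lemma ival_top : ival (\top : Itv) = lo `|` hi. Proof. by []. Qed.

End Itv.
Arguments ival {d T lo hi}.
Arguments MkItv {d T lo hi ival}.
Arguments ivalP {d T lo hi}.

Section ItvGeom.
Context {d : Order.disp_t} (T : finTBLatticeType d) (lo hi : T).
Local Notation I := (Itv lo hi).

Lemma covers_I (x y : I) : covers x y = covers (ival x) (ival y).
Proof.
rewrite /covers ival_lt; case: (ival x < ival y) => //=.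
apply/forallP/forallP => H w.
  apply/negP => /andP[xw wy].
  have Iw : inI lo hi w.
    case/andP: (ivalP x) => a _; case/andP: (ivalP y) => _ b.
    by rewrite /inI (le_trans a (ltW xw)) (le_trans (ltW wy) b).
  by have := H (MkItv Iw); rewrite !ival_lt /= xw wy.
by have := H (ival w); rewrite !ival_lt.
Qed.

Lemma maxchain_I (x y : I) s :
  maxchain x y s = maxchain (ival x) (ival y) (map ival s).
Proof.
rewrite /maxchain path_map last_map (inj_eq val_inj); congr (_ && _).
by apply: eq_path => a b; rewrite /= covers_I.
Qed.

Lemma geometric_Itv : geometric T -> geometric I.
Proof.
case=> [[JD [h [hh hsub]]] At].
split; first split.
- by move=> x y s1 s2; rewrite !maxchain_I => /JD H /H; rewrite !size_map.
- exists (fun x : I => h (ival x) - h lo)%N; split.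
    by move=> x s; rewrite maxchain_I ival_bot => /(h_chain hh) ->; rewrite size_map addKn.
  move=> x y; rewrite ival_join ival_meet.
  have := hsub (ival x) (ival y).
  have l1 := h_le hh (proj1 (andP (ivalP x))).
  have l2 := h_le hh (proj1 (andP (ivalP y))).
  have l3 := h_le hh (proj1 (andP (ivalP (x `&` y)))).
  rewrite ival_meet in l3.
  have l4 := h_le hh (le_trans (proj1 (andP (ivalP x))) (leUl (ival x) (ival y))).
  lia.
- move=> x; case: (At (ival x)) => S0 [HS0 ex].
  exists [set z : I | covers lo (ival z) && (ival z <= ival x)]; split.
    by move=> a; rewrite inE => /andP[c _]; rewrite /atom covers_I ival_bot.
  apply/le_anti/andP; split; last first.
    by apply/joinsP => z; rewrite inE => /andP[_ zx]; rewrite ival_le.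
  set J := \join_(_ in _) _.
  rewrite ival_le ex; apply/joinsP => t tS0; have Att := HS0 t tS0.
  have loJ : lo <= ival J by case/andP: (ivalP J).
  case: (boolP (t <= lo)) => tlo; first exact: le_trans tlo loJ.
  have tx : t <= ival x by rewrite ex; exact: (joins_sup (fun a => a) tS0).
  have Ix : inI lo hi (t `|` lo).
    by rewrite /inI leUr leUx (le_trans tx (proj2 (andP (ivalP x)))) leUl.
  have zS : MkItv Ix \in [set z : I | covers lo (ival z) && (ival z <= ival x)].
    rewrite inE /= leUx tx (proj1 (andP (ivalP x))) andbT.
    rewrite andbT; apply: (cover_of_h hh).
      rewrite lt_def leUr andbT; apply/negP => /eqP e.
      by move: tlo; rewrite -e leUl.
    have := hsub t lo; rewrite (h_atom hh Att).
    have -> : t `&` lo = \bot.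
      case: (eqVneq (t `&` lo) \bot) => // ne.
      move/andP: Att => [_ /forallP /(_ (t `&` lo))].
      rewrite lt_def ne le0x /= lt_def leIl andbT.
      case: (eqVneq (t `&` lo) t) => [e|] //.
      by move: tlo; rewrite -e leIr.
    by rewrite (h_bot hh) addn0 add1n.
  apply: le_trans (leUl t lo) _.
  by have := joins_sup (fun z => z) zS; rewrite ival_le.
Qed.

End ItvGeom.

Definition GItv (A : GObj) (lo hi : A) : GObj :=
  @MkGObj _ (Itv lo hi) (geometric_Itv lo hi (ggeom A)).

Lemma bool_covers (x y : bool) : covers x y = (~~ x && y).
Proof.
rewrite /covers; case: x; case: y => //=; rewrite ?ltxx //.
by apply/forallP; case; apply/negP; case/andP.
Qed.

Lemma bool_maxchain (x y : bool) s : maxchain x y s -> size s = nat_of_bool (~~ x && y).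
Proof.
rewrite /maxchain; case: s => [|a [|b s]] /=.
- by move/eqP => ->; case: y.
- by rewrite bool_covers; case: x; case: a; case: y.
- by rewrite !bool_covers; case: x; case: a; case: b.
Qed.

Lemma geometric_bool : geometric bool.
Proof.
split; first split.
- by move=> x y s1 s2 /bool_maxchain -> /bool_maxchain ->.
- exists (fun x : bool => nat_of_bool x); split.
    by move=> x s /bool_maxchain ->.
  by case; case.
- move=> x; exists (if x then [set true] else set0); split.
    move=> a; case: x => Ha; rewrite ?inE in Ha => //.
    by rewrite (eqP Ha) /atom bool_covers.
  by case: x; rewrite ?big_set1 ?big_set0.
Qed.

Definition boolG : GObj := @MkGObj _ bool geometric_bool.
Definition ZeroG : GObj := @GItv boolG false false.

Lemma ZeroG_all (z w : ZeroG) : z = w.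
Proof.
apply: val_inj; case: z => a Ha; case: w => b Hb /=.
by move: Ha Hb; rewrite /inI; case: a; case: b.
Qed.

Lemma compact_all {d} (T : finTBLatticeType d) (x : T) : compact x.
Proof. by move=> S H; exists S; split. Qed.

Lemma join_set2 {d} (T : finTBLatticeType d) (x y : T) :
  \join_(z in [set x; y]) z = x `|` y.
Proof. by rewrite joins_setU !big_set1. Qed.

Section LmorFacts.
Variables (A B : GObj).
Implicit Types f : A -> B.

Lemma Lmor_bot f : Lmor f -> f \bot = \bot.
Proof. by case=> H _; have := H set0; rewrite !big_set0. Qed.

Lemma Lmor_join f : Lmor f -> forall x y, f (x `|` y) = f x `|` f y.
Proof.
case=> H _ x y; have := H [set x; y]; rewrite join_set2 => ->.
by rewrite joins_setU !big_set1.
Qed.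

Lemma LmorI f : f \bot = \bot -> (forall x y, f (x `|` y) = f x `|` f y) -> Lmor f.
Proof.
move=> H0 HU; split; last by move=> x _; exact: compact_all.
move=> S; exact: (big_morph f HU H0).
Qed.

Lemma Lmor_mono f : Lmor f -> forall x y, x <= y -> f x <= f y.
Proof. by move=> L x y /join_idPr e; rewrite -e (Lmor_join L) leUl. Qed.

Lemma NMono_le f : NMono f -> forall x y, (f x <= f y) = (x <= y).
Proof.
case=> L [inj _] x y; apply/idP/idP; last exact: Lmor_mono.
by move/join_idPr; rewrite -(Lmor_join L) => /inj <-; rewrite leUl.
Qed.

Lemma NMono_bot f : NMono f -> forall x, (f x == \bot) = (x == \bot).
Proof.
case=> L [inj _] x; rewrite -(Lmor_bot L); apply/eqP/eqP; first exact: inj.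
by move=> ->.
Qed.

Lemma NMono_down f : NMono f -> forall y, y <= f \top -> exists z, f z = y.
Proof. by case=> _ [_ H] y /H. Qed.

End LmorFacts.

Lemma Lmor_comp (A B C : GObj) (f : A -> B) (g : B -> C) :
  Lmor f -> Lmor g -> Lmor (g \o f).
Proof.
move=> Lf Lg; apply: LmorI => [|x y] /=; first by rewrite (Lmor_bot Lf) (Lmor_bot Lg).
by rewrite (Lmor_join Lf) (Lmor_join Lg).
Qed.

Lemma Lmor_nle (A : GObj) (m : A) : Lmor (fun y : A => (~~ (y <= m) : boolG)).
Proof.
apply: LmorI => [|x y]; first by rewrite le0x.
by rewrite leUx negb_and.
Qed.

Lemma Lmor_from_bool (B : GObj) (f : boolG -> B) : f false = \bot -> Lmor f.
Proof.
move=> H; apply: LmorI => [|x y]; first exact: H.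
have -> : (x `|` y : boolG) = x || y by [].
by case: x; case: y => /=; rewrite ?H ?join0x ?joinx0 ?joinxx.
Qed.

Definition preim (A B : GObj) (f : A -> B) (y : B) : A :=
  odflt \bot [pick z | f z == y].

Lemma preimK (A B : GObj) (f : A -> B) y : (exists z, f z = y) -> f (preim f y) = y.
Proof.
case=> z fz; rewrite /preim; case: pickP => [a /eqP //|/(_ z)].
by rewrite fz eqxx.
Qed.

Definition NEpiB (A B : GObj) (f : A -> B) (x0 : A) : Prop :=
  Lmor f /\ (forall y z, (f y <= f z) = (y `|` x0 <= z `|` x0)) /\
  (forall w, exists y, f y = w).

Section NEpiFacts.
Variables (A B : GObj) (f : A -> B).

Lemma NEpiB_eq x0 : NEpiB f x0 -> forall y, f (y `|` x0) = f y.
Proof. by case=> _ [Hle _] y; apply/le_anti; rewrite !Hle -joinA joinxx lexx. Qed.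

Lemma NEpiB_x0 x0 : NEpiB f x0 -> f x0 = \bot.
Proof. by move=> H; rewrite -(join0x x0) (NEpiB_eq H) (Lmor_bot (proj1 H)). Qed.

Lemma NEpiB_top x0 : NEpiB f x0 -> f \top = \top.
Proof.
case=> L [_ Hs]; case: (Hs \top) => y Hy; apply/le_anti; rewrite lex1 /=.
by rewrite -Hy; apply: (Lmor_mono L); rewrite lex1.
Qed.

Lemma NEpi_B : NEpi f -> exists x0, NEpiB f x0.
Proof.
case=> L [x0 [phi [Hr [Hs Hf]]]]; exists x0; split => //; split.
  by move=> y z; rewrite !Hf Hr // leUr.
move=> w; case: (Hs w) => y [x0y <-]; exists y; rewrite Hf.
by rewrite (join_idPl x0y).
Qed.

Lemma B_NEpi x0 : NEpiB f x0 -> NEpi f.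
Proof.
move=> H; case: (H) => L [Hle Hs]; split => //; exists x0, f; split; [|split].
- by move=> y z x0y x0z; rewrite Hle (join_idPl x0y) (join_idPl x0z).
- move=> w; case: (Hs w) => y <-; exists (y `|` x0); split; first exact: leUr.
  exact: NEpiB_eq.
- by move=> y; rewrite (NEpiB_eq H).
Qed.

Lemma NEpi_surj : NEpi f -> forall w, exists y, f y = w.
Proof. by case/NEpi_B => x0 [_ []]. Qed.

End NEpiFacts.

Section Square.
Variables (A B A' B' : GObj) (i : A -> B) (p : A -> A') (j : A' -> B') (q : B -> B').
Hypotheses (Hi : NMono i) (Hj : NMono j) (Hp : NEpi p) (Hc : commutes i p j q).
Variable b0 : B.
Hypothesis Hq : NEpiB q b0.

Let Lq := proj1 Hq.
Let Hle := proj1 (proj2 Hq).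
Let Hs := proj2 (proj2 Hq).
Let inj_i := proj1 (proj2 Hi).
Let inj_j := proj1 (proj2 Hj).

Lemma p_top : p \top = \top.
Proof. by case: (NEpi_B Hp) => x0 H; exact: NEpiB_top H. Qed.

Lemma sq_pb : b0 <= i \top -> GPullback i p j q.
Proof.
move=> Hb; split => // X u v Lu Lv Huv.
have Hu : forall x, exists z, i z = u x.
  move=> x; apply: (NMono_down Hi).
  have : q (u x) <= q (i \top).
    by rewrite Huv Hc p_top; apply: (Lmor_mono (proj1 Hj)); rewrite lex1.
  by rewrite Hle (join_idPl Hb) leUx => /andP[].
have Hw x : i (preim i (u x)) = u x := preimK (Hu x).
exists (fun x => preim i (u x)); split.
  apply: LmorI => [|x y]; apply: inj_i.
    by rewrite Hw (Lmor_bot Lu) (Lmor_bot (proj1 Hi)).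
  by rewrite (Lmor_join (proj1 Hi)) !Hw (Lmor_join Lu).
split => //; split.
  by move=> x; apply: inj_j; rewrite -Hc Hw Huv.
by move=> w' _ Hw' _ x; apply: inj_i; rewrite Hw' Hw.
Qed.

Lemma sq_po : b0 <= i \top -> GPushout i p j q.
Proof.
move=> Hb; split => // X u v Lu Lv Huv.
have ix1 : i (preim i b0) = b0 by apply: preimK; exact: (NMono_down Hi).
have pb : p (preim i b0) = \bot.
  by apply/eqP; rewrite -(NMono_bot Hj) -Hc ix1 (NEpiB_x0 Hq).
have ub0 : u b0 = \bot by rewrite -ix1 Huv pb (Lmor_bot Lv).
have wd : forall y y', q y = q y' -> u y = u y'.
  move=> y y' e.
  have e' : y `|` b0 = y' `|` b0 by apply/le_anti; rewrite -!Hle e lexx.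
  by rewrite -[u y]joinx0 -ub0 -(Lmor_join Lu) e' (Lmor_join Lu) ub0 joinx0.
have Hwq y : u (preim q (q y)) = u y by apply: wd; apply: preimK; exists y.
exists (fun t => u (preim q t)); split.
  apply: LmorI => [|s t].
    by rewrite -{1}(Lmor_bot Lq) Hwq (Lmor_bot Lu).
  case: (Hs s) => y <-; case: (Hs t) => y' <-.
  by rewrite -(Lmor_join Lq) !Hwq (Lmor_join Lu).
split => //; split.
  by move=> z; case: (NEpi_surj Hp z) => x <-; rewrite -Hc Hwq Huv.
by move=> w' _ H1 _ t; case: (Hs t) => y <-; rewrite H1 Hwq.
Qed.

Lemma pb_sq : GPullback i p j q -> b0 <= i \top.
Proof.
case=> _ H.
pose u := (fun x : boolG => if x then i \top `|` b0 else \bot) : boolG -> B.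
pose v := (fun x : boolG => if x then \top else \bot) : boolG -> A'.
have Lu : Lmor u by apply: Lmor_from_bool.
have Lv : Lmor v by apply: Lmor_from_bool.
have Huv : forall x, q (u x) = j (v x).
  case => /=; last by rewrite (Lmor_bot Lq) (Lmor_bot (proj1 Hj)).
  by rewrite (NEpiB_eq Hq) Hc p_top.
case: (H boolG u v Lu Lv Huv) => w [_ [Hw _]].
have := Hw true => /= e.
have : i \top `|` b0 <= i \top by rewrite -e; apply: (Lmor_mono (proj1 Hi)); rewrite lex1.
by rewrite leUx => /andP[].
Qed.

Lemma po_sq : GPushout i p j q -> b0 <= i \top.
Proof.
case=> _ H.
pose u := (fun y : B => (~~ (y <= b0 `&` i \top) : boolG)).
pose v := (fun z : A' => (~~ (z <= \bot) : boolG)).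
have Huv : forall x, u (i x) = v (p x).
  move=> x; rewrite /u /v -(NMono_le Hj) -Hc (Lmor_bot (proj1 Hj)) -(Lmor_bot Lq) Hle.
  rewrite join0x leUx lexx andbT lexI.
  by rewrite (Lmor_mono (proj1 Hi) (lex1 x)) andbT.
case: (H boolG u v (Lmor_nle _) (Lmor_nle _) Huv) => w [Lw [Hw _]].
have := Hw b0; rewrite (NEpiB_x0 Hq) (Lmor_bot Lw) /u.
by case: (boolP (b0 <= b0 `&` i \top)) => //; rewrite lexI lexx.
Qed.

Lemma sq_iff : GPullback i p j q <-> GPushout i p j q.
Proof.
split => H; first exact/sq_po/pb_sq.
exact/sq_pb/po_sq.
Qed.

End Square.

Lemma zero_part : exists Z : GObj, GZero Z /\
     forall A : GObj,
       (exists f : Z -> A, NMono f) /\ (exists g : A -> Z, NEpi g).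
Proof.
exists ZeroG; split; first split.
- move=> A; exists (fun _ => \bot); split.
    by apply: LmorI => // x y; rewrite joinxx.
  by move=> g Lg z; rewrite (ZeroG_all z \bot) (Lmor_bot Lg).
- move=> A; exists (fun _ => \bot); split.
    by apply: LmorI => // x y; apply: ZeroG_all.
  by move=> g _ a; apply: ZeroG_all.
move=> A; split.
  exists (fun _ => \bot); split; first by apply: LmorI => // x y; rewrite joinxx.
  split; first by move=> x y _; apply: ZeroG_all.
  by move=> x y H; exists x; apply/le_anti; rewrite H le0x.
exists (fun _ : A => (\bot : ZeroG)); apply: (B_NEpi (x0:=\top)); split.
  by apply: LmorI => // x y; apply: ZeroG_all.
split; first by move=> y z; rewrite !joinx1 !lexx.
by move=> w; exists \top; apply: ZeroG_all.
Qed.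

Lemma iso_part (A B : GObj) (f : A -> B) : GIso f -> NMono f /\ NEpi f.
Proof.
case=> L [g [Lg [gf fg]]].
have inj : injective f := can_inj gf.
split; first by split => //; split => // x y _; exists (g y); exact: fg.
apply: (B_NEpi (x0:=\bot)); split => //; split.
  move=> y z; rewrite !joinx0; apply/idP/idP; last exact: Lmor_mono.
  by move/(Lmor_mono Lg); rewrite !gf.
by move=> w; exists (g w).
Qed.

Lemma mono_comp (A B C : GObj) (f : A -> B) (g : B -> C) :
  NMono f -> NMono g -> NMono (g \o f).
Proof.
move=> Hf Hg; split; first exact: Lmor_comp (proj1 Hf) (proj1 Hg).
split; first exact: inj_comp (proj1 (proj2 Hg)) (proj1 (proj2 Hf)).
move=> x y /= H.
case: (proj2 (proj2 Hg) (f x) y H) => z gz.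
move: H; rewrite -gz (NMono_le Hg) => H.
case: (proj2 (proj2 Hf) x z H) => t ft.
by exists t; rewrite /= ft.
Qed.

Lemma epi_comp (A B C : GObj) (f : A -> B) (g : B -> C) :
  NEpi f -> NEpi g -> NEpi (g \o f).
Proof.
case/NEpi_B => x0 [Lf [Hf Sf]]; case/NEpi_B => y0 [Lg [Hg Sg]].
have fy1 : f (preim f y0) = y0 by apply: preimK.
move: (preim f y0) fy1 => y1 fy1.
apply: (B_NEpi (x0 := x0 `|` y1)); split; first exact: Lmor_comp.
split.
  move=> y z /=; rewrite Hg -fy1 -!(Lmor_join Lf) Hf.
  by rewrite [x0 `|` _]joinC !joinA.
move=> w; case: (Sg w) => t <-; case: (Sf t) => s <-; by exists s.
Qed.

Lemma cospan_part (A' B B' : GObj) (j : A' -> B') (q : B -> B') :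
  NMono j -> NEpi q ->
  exists (A : GObj) (i : A -> B) (p : A -> A'),
    NMono i /\ NEpi p /\ GPullback i p j q /\ GPushout i p j q.
Proof.
move=> Hj Hq; case: (NEpi_B Hq) => b0 Hb.
have [Lq [Hle Hs]] := Hb.
have inj_j := proj1 (proj2 Hj).
pose c' := preim q (j \top) `|` b0.
have qc : q c' = j \top by rewrite /c' (NEpiB_eq Hb); apply: preimK; apply: Hs.
have b0c : b0 <= c' by rewrite leUr.
have c'b0 : c' `|` b0 = c' by rewrite /c' -joinA joinxx.
pose A := GItv (\bot : B) c'.
have Hpre : forall x : A, exists z, j z = q (ival x).
  move=> x; apply: (NMono_down Hj); rewrite -qc Hle c'b0 leUx b0c andbT.
  by have := proj2 (andP (ivalP x)); rewrite join0x.
pose p := fun x : A => preim j (q (ival x)).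
have Hpj x : j (p x) = q (ival x) := preimK (Hpre x).
have Ib0 : inI (\bot : B) c' b0 by rewrite /inI le0x join0x b0c.
pose x0 := (MkItv Ib0 : A).
have Hi : NMono (fun x : A => ival x).
  split; first by apply: LmorI.
  split; first exact: val_inj.
  move=> x y H.
  have Iy : inI (\bot : B) c' y by rewrite /inI le0x (le_trans H (proj2 (andP (ivalP x)))).
  by exists (MkItv Iy : A).
have Hp : NEpiB p x0.
  split.
    apply: LmorI => [|x y]; apply: inj_j; rewrite Hpj.
      by rewrite (Lmor_bot Lq) (Lmor_bot (proj1 Hj)).
    by rewrite (Lmor_join (proj1 Hj)) !Hpj -(Lmor_join Lq).
  split.
    by move=> y z; rewrite -(NMono_le Hj) !Hpj Hle.
  move=> w; case: (Hs (j w)) => t qt.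
  have tc : t `|` b0 <= c'.
    rewrite -c'b0 -Hle qt qc; apply: (Lmor_mono (proj1 Hj)); exact: lex1.
  have It : inI (\bot : B) c' (t `|` b0) by rewrite /inI le0x join0x.
  exists (MkItv It : A); apply: inj_j; rewrite Hpj /= (NEpiB_eq Hb) qt //.
have Hc : commutes (fun x : A => ival x) p j q by move=> x; rewrite Hpj.
have Htop : b0 <= ival (\top : A) by rewrite ival_top join0x.
exists A, (fun x => ival x), p; split => //; split; first exact: B_NEpi Hp.
split; first exact: (sq_pb Hi Hj (B_NEpi Hp) Hc Hb Htop).
exact: (sq_po Hi Hj (B_NEpi Hp) Hc Hb Htop).
Qed.

Lemma span_part (A A' B : GObj) (p : A -> A') (i : A -> B) :
  NEpi p -> NMono i ->
  exists (B' : GObj) (j : A' -> B') (q : B -> B'),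
    NMono j /\ NEpi q /\ GPullback i p j q /\ GPushout i p j q.
Proof.
move=> Hp Hi; case: (NEpi_B Hp) => a0 Ha.
have [Lp [Hlep Hsp]] := Ha.
have Li := proj1 Hi; have inj_i := proj1 (proj2 Hi).
pose b := i a0.
pose B' := GItv b (\top : B).
have Iq : forall y : B, inI b \top (y `|` b) by move=> y; rewrite /inI leUr joinx1 lex1.
pose q := fun y : B => (MkItv (Iq y) : B').
pose j := fun z : A' => q (i (preim p z)).
have qi_eq : forall x x', p x = p x' -> q (i x) = q (i x').
  move=> x x' e; apply: val_inj => /=; rewrite /b -!(Lmor_join Li); congr i.
  by apply/le_anti; rewrite -!Hlep e lexx.
have Hjp x : j (p x) = q (i x) by apply: qi_eq; apply: preimK; exists x.
have Lq : Lmor q.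
  apply: LmorI => [|y y']; apply: val_inj => /=; first by rewrite join0x.
  by rewrite joinACA joinxx.
have Hq : NEpiB q b.
  split => //; split => // w; exists (ival w); apply: val_inj => /=.
  exact/join_idPl/(proj1 (andP (ivalP w))).
have Hj : NMono j.
  split.
    apply: LmorI => [|z z'].
      by rewrite -{1}(Lmor_bot Lp) Hjp (Lmor_bot Li) (Lmor_bot Lq).
    case: (Hsp z) => x <-; case: (Hsp z') => x' <-.
    by rewrite -(Lmor_join Lp) !Hjp (Lmor_join Li) (Lmor_join Lq).
  split.
    move=> z z'; case: (Hsp z) => x <-; case: (Hsp z') => x' <-; rewrite !Hjp => e.
    have := congr1 ival e => /=; rewrite /b -!(Lmor_join Li) => /inj_i e'.
    by apply/le_anti; rewrite !Hlep e' lexx.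
  move=> z y; case: (Hsp z) => x <-; rewrite Hjp => H.
  have H' : ival y <= i \top.
    apply: (le_trans (y := ival (q (i x)))); first exact: H.
    rewrite /= /b -(Lmor_join Li).
    by apply: (Lmor_mono Li); rewrite lex1.
  case: (NMono_down Hi H') => t it.
  exists (p t); rewrite Hjp; apply: val_inj => /=; rewrite it.
  exact/join_idPl/(proj1 (andP (ivalP y))).
have Hc : commutes i p j q by move=> x; rewrite Hjp.
have Htop : b <= i \top by apply: (Lmor_mono Li); rewrite lex1.
exists B', j, q; split => //; split; first exact: B_NEpi Hq.
split; first exact: (sq_pb Hi Hj Hp Hc Hq Htop).
exact: (sq_po Hi Hj Hp Hc Hq Htop).
Qed.

Theorem mainTheorem6 : ProtoExactG.
Proof.
split; first exact: zero_part.
split; first exact: iso_part.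
split; first exact: mono_comp.
split; first exact: epi_comp.
split.
  move=> A B A' B' i p j q Hi Hj Hp Hq Hc.
  case: (NEpi_B Hq) => b0 Hb; exact: (sq_iff Hi Hj Hp Hc Hb).
split; first exact: cospan_part.
exact: span_part.
Qed.
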